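(* Let $(X,d)$ be a compact metric space and let $f:X\to X$ be a continuous map. Then there is no closed set $J\subseteq CR_f$ such that the poset $(J/E,\preceq)$ is linearly and densely ordered. In particular, the chain components poset $(\mathfrak{C}_f,\preceq)$ is not linearly and densely ordered.
   Context: Let $(X,d)$ be a metric space and $f:X\to X$ a map. For $\varepsilon>0$ and $x,y\in X$, an $\varepsilon$-chain from $x$ to $y$ is a finite sequence $x_0=x,x_1,\dots,x_n=y$ with $n\ge 1$ and $d(f(x_i),x_{i+1})<\varepsilon$ for $i=0,\dots,n-1$. Write $x\,\mathcal{C}\,y$ if for every $\varepsilon>0$ there is an $\varepsilon$-chain from $x$ to $y$. The chain recurrent set is $CR_f=\{x\in X: x\,\mathcal{C}\,x\}$. On $CR_f$ define the equivalence relation $x\,E\,y$ iff $x\,\mathcal{C}\,y$ and $y\,\mathcal{C}\,x$; the equivalence classes are the chain components, and $\mathfrak{C}_f=CR_f/E$. The partial order on chain components is $[x]\preceq[y]$ iff $y\,\mathcal{C}\,x$; $(\mathfrak{C}_f,\preceq)$ is the chain components poset. For $J\subseteq CR_f$, $J/E$ denotes the set of $E$-classes of points of $J$ (i.e. $E$ restricted to $J$), ordered by the same rule $[x]\preceq[y]$ iff $y\,\mathcal{C}\,x$. A poset is densely ordered if it has at least two elements and for every $a<b$ there is $c$ with $a<c<b$ (so a densely ordered poset is infinite). *)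

(* Defs.v *)
From HB Require Import structures.
From mathcomp Require Import all_boot all_order all_algebra.
From mathcomp Require Import all_classical all_reals topology.
Set Implicit Arguments. Unset Strict Implicit. Unset Printing Implicit Defensive.
Import Order.TTheory GRing.Theory Num.Theory.
Local Open Scope classical_set_scope.
Local Open Scope ring_scope.

Section ChainDefs.
Context {R : realType} {X : metricType R}.

Definition eps_chain (f : X -> X) (eps : R) (x y : X) : Prop :=
  exists (n : nat) (s : nat -> X), (1 <= n)%N /\ s 0%N = x /\ s n = y /\
    forall i : nat, (i < n)%N -> mdist (f (s i)) (s i.+1) < eps.

Definition chain_rel (f : X -> X) (x y : X) : Prop :=
  forall eps : R, 0 < eps -> eps_chain f eps x y.

Definition CR (f : X -> X) : set X := [set x | chain_rel f x x].

Definition chainE (f : X -> X) (x y : X) : Prop := chain_rel f x y /\ chain_rel f y x.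

(* order on classes, via representatives: [x] <= [y] iff y C x *)
Definition cle (f : X -> X) (x y : X) : Prop := chain_rel f y x.
Definition clt (f : X -> X) (x y : X) : Prop := cle f x y /\ ~ chainE f x y.

Definition quot_lin_dense (f : X -> X) (J : set X) : Prop :=
  (* at least two elements (two distinct classes) *)
  (exists x y, J x /\ J y /\ ~ chainE f x y) /\
  (forall x y, J x -> J y -> cle f x y \/ cle f y x) /\
  (forall x y, J x -> J y -> clt f x y ->
     exists z, J z /\ clt f x z /\ clt f z y).

End ChainDefs.

(* Main.v *)
Require Import Defs.
From HB Require Import structures.
From mathcomp Require Import all_boot all_order all_algebra.
From mathcomp Require Import all_classical all_reals topology.
Import Order.TTheory GRing.Theory Num.Theory.
Local Open Scope classical_set_scope.
Local Open Scope ring_scope.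
Import metricType_numDomainType.
From mathcomp Require Import lra.
Section S.
Context {R : realType} {X : metricType R}.
Implicit Types (f : X -> X).
Lemma closure_of_mdist (A : set X) x :
  (forall d : R, 0 < d -> exists y, A y /\ mdist x y < d) -> closure A x.
Proof.
move=> H B /nbhs_mdistP [d d0 Hd]; have [y [Ay xy]] := H d d0.
by exists y; split => //; apply: Hd.
Qed.
Lemma closedP' (A : set X) :
  (forall x, (forall d : R, 0 < d -> exists y, A y /\ mdist x y < d) -> A x) -> closed A.
Proof.
move=> H x cx; apply: H => d d0.
have := cx (ball x d) (nbhsx_ballx _ _ d0).
by move=> [y [Ay]]; rewrite ballEmdist => ?; exists y.
Qed.
Lemma closure_mdist (A : set X) x : closure A x -> forall d : R, 0 < d -> exists y, A y /\ mdist x y < d.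
Proof.
move=> cx d d0; have := cx (ball x d) (nbhsx_ballx _ _ d0).
by move=> [y [Ay]]; rewrite ballEmdist => ?; exists y.
Qed.
Lemma cont_mdist (f : X -> X) x : continuous f -> forall e : R, 0 < e ->
  exists2 d : R, 0 < d & forall y, mdist x y < d -> mdist (f x) (f y) < e.
Proof.
move=> cf e e0.
have [d d0 H] := (nbhs_mdistP _ _).1 (cvgr_dist_lt (cf x) e0).
exists d => // y xy; exact: (H y xy).
Qed.

Lemma chain_perturb f (e : R) n (s : nat -> X) x y : (1 <= n)%N ->
  (forall i, (i < n)%N -> mdist (f (s i)) (s i.+1) < e) ->
  eps_chain f (mdist (f x) (f (s 0%N)) + e + mdist (s n) y) x y.
Proof.
move=> n1 hs.
exists n, (fun i => if i == 0%N then x else if i == n then y else s i).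
have n0 : (n == 0%N) = false by case: n n1 hs.
split; first by [].
split; first by rewrite eqxx.
split; first by rewrite n0 eqxx.
move=> i ilt.
set s' := (fun i => if i == 0%N then x else if i == n then y else s i).
have h1 : mdist (f (s' i)) (f (s i)) <= mdist (f x) (f (s 0%N)).
  rewrite /s'; case: eqP => [->|i0]; first by [].
  by rewrite (ltn_eqF ilt) mdistxx mdist_ge0.
have h3 : mdist (s i.+1) (s' i.+1) <= mdist (s n) y.
  rewrite /s' /=; case: eqP => [<-|_]; first by [].
  by rewrite mdistxx mdist_ge0.
apply: (le_lt_trans (metric_triangle _ (f (s i)) _)).
rewrite -addrA; apply: ler_ltD => //.
apply: (le_lt_trans (metric_triangle _ (s i.+1) _)).
exact: (ltr_leD (hs i ilt) h3).
Qed.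

Lemma chain_mono f (e1 e2 : R) x y : e1 <= e2 -> eps_chain f e1 x y -> eps_chain f e2 x y.
Proof.
move=> le [n [s [n1 [s0 [sn hs]]]]]; exists n, s; do 3 (split => //).
by move=> i /hs h; apply: lt_le_trans le.
Qed.

Lemma chain_trans f (e : R) x y z : eps_chain f e x y -> eps_chain f e y z -> eps_chain f e x z.
Proof.
move=> [n [s [n1 [s0 [sn hs]]]]] [m [t [m1 [t0 [tm ht]]]]].
exists (n + m)%N, (fun i => if (i <= n)%N then s i else t (i - n)%N).
have tE : forall i, (n <= i)%N -> (if (i <= n)%N then s i else t (i - n)%N) = t (i - n)%N.
  move=> i ni; case: ifP => // iln.
  have -> : i = n by apply/eqP; rewrite eqn_leq iln ni.
  by rewrite subnn t0 sn.
split; first by rewrite (leq_trans n1) // leq_addr.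
split; first by rewrite leq0n.
split; first by rewrite tE ?leq_addr // addKn.
move=> i ilt; case: (ltnP i n) => [iln|nli].
  by rewrite /= (ltnW iln); apply: hs.
rewrite /= tE //.
rewrite subSn //; apply: ht; by rewrite ltn_subLR // addnC.
Qed.

Lemma chain_rel_trans f x y z : chain_rel f x y -> chain_rel f y z -> chain_rel f x z.
Proof. by move=> h1 h2 e e0; apply: chain_trans (h1 e e0) (h2 e e0). Qed.

Lemma near_chain f (e : R) z w : 0 < e -> CR f z -> mdist z w < e / 2 -> eps_chain f e z w.
Proof.
move=> e0 cz zw.
have [n [s [n1 [s0 [sn hs]]]]] := cz (e / 2) ltac:(by rewrite divr_gt0).
apply: chain_mono (chain_perturb f _ _ _ z w n1 hs).
rewrite s0 sn mdistxx add0r; lra.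
Qed.

Lemma closed_chain2 f z : closed [set w | chain_rel f z w].
Proof.
apply: closedP' => w H e e0.
have [w' [zw' ww']] := H (e / 2) ltac:(by rewrite divr_gt0).
have [n [s [n1 [s0 [sn hs]]]]] := zw' (e / 2) ltac:(by rewrite divr_gt0).
apply: chain_mono (chain_perturb f _ _ _ z w n1 hs).
rewrite s0 sn mdistxx add0r metric_sym; lra.
Qed.

Lemma closed_chain1 f z : continuous f -> closed [set w | chain_rel f w z].
Proof.
move=> cf; apply: closedP' => w H e e0.
have [d d0 hd] := @cont_mdist f w cf (e / 2) ltac:(by rewrite divr_gt0).
have [w' [w'z ww']] := H d d0.
have [n [s [n1 [s0 [sn hs]]]]] := w'z (e / 2) ltac:(by rewrite divr_gt0).
apply: chain_mono (chain_perturb f _ _ _ w z n1 hs).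
have := hd _ ww'; rewrite s0 sn mdistxx addr0; lra.
Qed.

Lemma closed_CR f : continuous f -> closed (CR f).
Proof.
move=> cf; apply: closedP' => x H e e0.
have [d d0 hd] := @cont_mdist f x cf (e / 3) ltac:(by rewrite divr_gt0).
have [w' [cw' xw']] := H (Num.min d (e / 3)) ltac:(by rewrite lt_min d0 divr_gt0).
have [n [s [n1 [s0 [sn hs]]]]] := cw' (e / 3) ltac:(by rewrite divr_gt0).
apply: chain_mono (chain_perturb f _ _ _ x x n1 hs).
move: xw'; rewrite lt_min => /andP[xd xe].
have := hd _ xd; rewrite s0 sn (metric_sym w' x); lra.
Qed.

Lemma exists_extremum (K : set X) (r : X -> X -> Prop) :
  compact K -> closed K -> (exists z, K z) ->
  (forall a, K a -> r a a) ->
  (forall a b c, r a b -> r b c -> r a c) ->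
  (forall a b, K a -> K b -> r a b \/ r b a) ->
  (forall z, closed [set w | r z w]) ->
  exists p, K p /\ forall z, K z -> r z p.
Proof.
move=> cK clK [z0 Kz0] refl tr lin clr.
pose B := fun z => K `&` [set w | r z w].
have FF : Filter (filter_from K B).
  apply: filter_from_filter; first by exists z0.
  move=> i j Ki Kj; case: (lin i j Ki Kj) => hij.
    exists j => // w [Kw rjw]; split; split => //; exact: tr hij rjw.
  exists i => // w [Kw riw]; split; split => //; exact: tr hij riw.
have PF : ProperFilter (filter_from K B).
  apply: filter_from_proper => i Ki; exists i; split => //; exact: refl.
have [p [Kp clp]] := cK _ PF (ex_intro2 _ _ z0 Kz0 (fun w (h : B z0 w) => h.1)).
exists p; split => // z Kz.
have : closure (B z) p.
  move=> C nC; apply: clp => //; exists z => //.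
move=> /(closedI clK (clr z)) [] //.
Qed.
End S.

Theorem theorem2p1 (R : realType) (X : metricType R) (f : X -> X) :
  compact [set: X] -> continuous f ->
  (forall J : set X, closed J -> J `<=` CR f -> ~ quot_lin_dense f J) /\
  ~ quot_lin_dense f (CR f).
Proof.
move=> cX cf.
have main : forall J, closed J -> J `<=` CR f -> ~ quot_lin_dense f J.
  move=> J clJ JCR [[a [b [Ja [Jb nab]]]] [lin dense]].
  have [x [y [Jx [Jy [yx nxy]]]]] : exists x y, J x /\ J y /\ chain_rel f y x /\ ~ chain_rel f x y.
    case: (lin a b Ja Jb) => h.
      exists a, b; split; first by []; split; first by []; split; first by [].
      by move=> ab; apply: nab.
    exists b, a; split; first by []; split; first by []; split; first by [].
    by move=> ba; apply: nab.
  have [eps [eps0 neps]] : exists eps, 0 < eps /\ ~ eps_chain f eps x y.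
    case: (pselect (exists e, 0 < e /\ ~ eps_chain f e x y)) => [//|H]; exfalso.
    apply: nxy => e e0; apply: contrapT => ne; apply: H; by exists e.
  pose U := J `&` [set z | eps_chain f eps x z].
  pose V := J `&` ~` [set z | eps_chain f eps x z].
  have clU : closed U.
    apply: closedP' => z H; split.
      apply: clJ; apply: closure_of_mdist => d d0.
      by have [w [[Jw _] zw]] := H d d0; exists w.
    have [w [[Jw xw] zw]] := H (eps / 2) ltac:(by rewrite divr_gt0).
    apply: chain_trans xw _; apply: near_chain => //; first exact: JCR.
    by rewrite metric_sym.
  have clV : closed V.
    apply: closedP' => z H.
    have Jz : J z.
      apply: clJ; apply: closure_of_mdist => d d0.
      by have [w [[Jw _] zw]] := H d d0; exists w.
    split => // xz.
    have [w [[Jw nxw] zw]] := H (eps / 2) ltac:(by rewrite divr_gt0).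
    apply: nxw; apply: chain_trans xz _; apply: near_chain => //; exact: JCR.
  have cU : compact U by apply: subclosed_compact clU cX _.
  have cV : compact V by apply: subclosed_compact clV cX _.
  have Ux : U x by split => //; apply: (JCR x Jx).
  have Vy : V y by split.
  have [u [Uu maxu]] : exists p, U p /\ forall z, U z -> chain_rel f p z.
    apply: (@exists_extremum R X U (fun z w => chain_rel f w z)) => //.
    - by exists x.
    - by move=> c [Jc _]; apply: JCR.
    - by move=> p q t h1 h2; apply: chain_rel_trans h2 h1.
    - by move=> p q [Jp _] [Jq _]; apply: lin.
    - by move=> z; apply: closed_chain1.
  have [v [Vv minv]] : exists p, V p /\ forall z, V z -> chain_rel f z p.
    apply: (@exists_extremum R X V (chain_rel f)) => //.
    - by exists y.
    - by move=> c [Jc _]; apply: JCR.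
    - by move=> p q t h1 h2; apply: chain_rel_trans h1 h2.
    - by move=> p q [Jp _] [Jq _]; case: (lin p q Jp Jq); [right|left].
    - by move=> z; apply: closed_chain2.
  have nuv : ~ chain_rel f u v.
    move=> uv; apply: Vv.2; apply: chain_trans Uu.2 (uv eps eps0).
  have cuv : cle f u v.
    by case: (lin u v Uu.1 Vv.1) => // h.
  have [z [Jz [[uz nuz] [zv nzv]]]] := dense u v Uu.1 Vv.1 (conj cuv (fun h : chainE f u v => nuv (proj1 h))).
  case: (pselect (eps_chain f eps x z)) => xz.
    by apply: nuz; split => //; apply: maxu.
  by apply: nzv; split => //; apply: minv.
split => //; apply: main => //; exact: closed_CR.
Qed.
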